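(* Suppose that the bivariate copula $A$ allows a continuous Markov kernel $K_A$. Then $$\lim_{N\to\infty}\sup_{(x,y)\in[0,1]^2}\left|K_{\mathcal{B}_N(A)}(x,[0,y])-K_A(x,[0,y])\right|=0,$$ i.e. $(\mathcal{B}_N(A))_{N\in\mathbb{N}}$ converges uniformly conditional to $A$.
   Context: A (bivariate) copula is a distribution function on $[0,1]^2$ with uniform marginals; each copula $B$ corresponds to a doubly stochastic measure $\mu_B$ with $B(x,y)=\mu_B([0,x]\times[0,y])$. A Markov kernel of $B$ is a map $K_B:[0,1]\times\mathcal{B}([0,1])\to[0,1]$, measurable in the first argument, a probability measure in the second, with $\int_{E_1}K_B(x,E_2)\,d\lambda(x)=\mu_B(E_1\times E_2)$ for all Borel $E_1,E_2$ ($\lambda$ = Lebesgue measure). $A$ allows a continuous Markov kernel if it has a version $K_A$ with $(x,y)\mapsto K_A(x,[0,y])$ continuous on $[0,1]^2$; $K_A$ denotes this version. Bernstein approximation: $p_{N,k}(u)=\binom Nk u^k(1-u)^{N-k}$ for $k\in\{0,\dots,N\}$ and $p_{N,k}\equiv0$ otherwise; $\mathcal{B}_N(A)(x,y)=\sum_{i,j=1}^N A(\tfrac iN,\tfrac jN)p_{N,i}(x)p_{N,j}(y)$, with Markov kernel version $K_{\mathcal{B}_N(A)}(x,[0,y])=N\sum_{i,j=1}^N A(\tfrac iN,\tfrac jN)\big(p_{N-1,i-1}(x)-p_{N-1,i}(x)\big)p_{N,j}(y)$. *)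

(* Defs.v *)
From HB Require Import structures.
From mathcomp Require Import all_boot all_order all_algebra.
From mathcomp Require Import all_classical all_reals all_analysis.
Set Implicit Arguments. Unset Strict Implicit. Unset Printing Implicit Defensive.
Import Order.TTheory GRing.Theory Num.Theory.
Import numFieldNormedType.Exports.
Local Open Scope classical_set_scope.
Local Open Scope ring_scope.

Definition I01 {R : realType} : set R := `[0, 1]%classic.
Definition square01 {R : realType} : set (R * R) := I01 `*` I01.

Definition copula_measure {R : realType} (A : R -> R -> R)
    (mu : {measure set (R * R) -> \bar R}) : Prop :=
  (forall x y : R, x \in I01 -> y \in I01 ->
     mu (`[0, x]%classic `*` `[0, y]%classic) = (A x y)%:E) /\
  mu (~` square01) = 0%E.

(* A is a (bivariate) copula: the distribution function on [0,1]^2 of a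
   probability measure mu (concentrated on [0,1]^2) with uniform marginals. *)
Definition is_copula {R : realType} (A : R -> R -> R)
    (mu : {measure set (R * R) -> \bar R}) : Prop :=
  copula_measure A mu /\
  (forall x : R, x \in I01 -> A x 1 = x /\ A 1 x = x).

Definition markov_kernel_of {R : realType}
    (mu : {measure set (R * R) -> \bar R}) (K : R.-pker R ~> R) : Prop :=
  (forall x : R, x \in I01 -> K x I01 = 1%E) /\
  (forall E1 E2 : set R, measurable E1 -> measurable E2 ->
     E1 `<=` I01 -> E2 `<=` I01 ->
     (\int[lebesgue_measure]_(x in E1) K x E2 = mu (E1 `*` E2))%E).

(* Bernstein basis polynomial p_{N,k}, extended by 0 for k > N. *)
Definition bern {R : realType} (N k : nat) (u : R) : R :=
  if (k <= N)%N then 'C(N, k)%:R * u ^+ k * (1 - u) ^+ (N - k) else 0.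

Definition KBernstein {R : realType} (A : R -> R -> R) (N : nat) (x y : R) : R :=
  N%:R * \sum_(1 <= i < N.+1) \sum_(1 <= j < N.+1)
    A (i%:R / N%:R) (j%:R / N%:R) * (bern N.-1 i.-1 x - bern N.-1 i x) * bern N j y.

Definition kernel_cdf {R : realType} (K : R.-pker R ~> R) (x y : R) : R :=
  fine (K x `[0, y]%classic).

(* Main.v *)
Require Import Defs.
From HB Require Import structures.
From mathcomp Require Import all_boot all_order all_algebra.
From mathcomp Require Import all_classical all_reals all_analysis.
From mathcomp Require Import measurable_realfun.
From mathcomp Require Import ring lra zify.
From Stdlib Require Import Lia.
Import Order.TTheory GRing.Theory Num.Theory.
Import numFieldNormedType.Exports.
Local Open Scope classical_set_scope.
Local Open Scope ring_scope.

Set Implicit Arguments. Unset Strict Implicit. Unset Printing Implicit Defensive.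


Lemma bern_ge0 (R : realType) n k (x : R) : 0 <= x <= 1 -> 0 <= bern n k x.
Proof.
move=> /andP[x0 x1]; rewrite /bern; case: ifP => // _.
by rewrite !mulr_ge0 ?exprn_ge0 ?subr_ge0.
Qed.

Lemma bernS0 (R : realType) n (x : R) : bern n.+1 0 x = (1 - x) * bern n 0 x.
Proof. by rewrite /bern !leq0n !bin0 !subn0 !expr0 !mul1r exprS. Qed.

Lemma bernSS (R : realType) n k (x : R) :
  bern n.+1 k.+1 x = x * bern n k x + (1 - x) * bern n k.+1 x.
Proof.
rewrite /bern ltnS subSS. 
case: (ltngtP k n) => hk /=.
- rewrite binS natrD.
  have -> : (n - k = (n - k.+1).+1)%N by rewrite subnSK.
  rewrite !exprS; ring.
- ring.
- subst k; rewrite subnn !binn exprS; ring.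
Qed.

Lemma bern_out (R : realType) n k (x : R) : (n < k)%N -> bern n k x = 0.
Proof. by rewrite /bern ltnNge => /negbTE ->. Qed.

Definition mom (R : realType) n (f : nat -> R) (x : R) :=
  \sum_(0 <= k < n.+1) f k * bern n k x.

Lemma mom_rec (R : realType) n f (x : R) :
  mom n.+1 f x = x * mom n (fun k => f k.+1) x + (1 - x) * mom n f x.
Proof.
rewrite /mom big_nat_recl // bernS0.
under eq_bigr do rewrite bernSS mulrDr.
rewrite big_split /=.
have -> : \sum_(0 <= k < n.+1) f k * bern n k x =
          f 0%N * bern n 0 x + \sum_(0 <= i < n.+1) f i.+1 * bern n i.+1 x.
  by rewrite -(big_nat_recl _ _ (fun k => f k * bern n k x)) // [in RHS]big_nat_recr //= bern_out // mulr0 addr0.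
rewrite mulrDr !mulr_sumr.
have -> : \sum_(0 <= i < n.+1) f i.+1 * (x * bern n i x) =
          \sum_(0 <= i < n.+1) x * (f i.+1 * bern n i x).
  by apply: eq_bigr => i _; ring.
have -> : \sum_(0 <= i < n.+1) f i.+1 * ((1 - x) * bern n i.+1 x) =
          \sum_(0 <= i < n.+1) (1 - x) * (f i.+1 * bern n i.+1 x).
  by apply: eq_bigr => i _; ring.
ring.
Qed.

Lemma mom1 (R : realType) n (x : R) : mom n (fun=> 1) x = 1.
Proof.
elim: n => [|n IH]; first by rewrite /mom big_nat1 /bern /= ?bin0 ?expr0 ?subn0; ring.
rewrite mom_rec IH; ring.
Qed.

Lemma momk (R : realType) n (x : R) : mom n (fun k => k%:R) x = n%:R * x.
Proof.
elim: n => [|n IH]; first by rewrite /mom big_nat1 /= ?mul0r; ring.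
rewrite mom_rec IH.
have -> : mom n (fun k => k.+1%:R) x = mom n (fun k => k%:R) x + mom n (fun=> 1) x.
  by rewrite /mom -big_split /=; apply: eq_bigr => i _; rewrite -natr1; ring.
rewrite IH mom1 -natr1; ring.
Qed.

Lemma momk2 (R : realType) n (x : R) :
  mom n (fun k => k%:R ^+ 2) x = n%:R * x * (1 - x) + (n%:R * x) ^+ 2.
Proof.
elim: n => [|n IH]; first by rewrite /mom big_nat1 /= ?expr0n /= ?mul0r; ring.
rewrite mom_rec IH.
have -> : mom n (fun k => k.+1%:R ^+ 2) x =
   mom n (fun k => k%:R ^+ 2) x + 2 * mom n (fun k => k%:R) x + mom n (fun=> 1) x.
  rewrite /mom mulr_sumr -!big_split /=; apply: eq_bigr => i _; rewrite -natr1; ring.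
rewrite IH momk mom1 -natr1; ring.
Qed.

Lemma bern_var (R : realType) n (x : R) : (0 < n)%N ->
  \sum_(0 <= k < n.+1) (k%:R / n%:R - x) ^+ 2 * bern n k x = x * (1 - x) / n%:R.
Proof.
move=> n0.
have nz : n%:R != 0 :> R by rewrite pnatr_eq0 -lt0n.
have -> : \sum_(0 <= k < n.+1) (k%:R / n%:R - x) ^+ 2 * bern n k x =
  n%:R^-2 * mom n (fun k => k%:R ^+ 2) x - 2 * x / n%:R * mom n (fun k => k%:R) x
  + x ^+ 2 * mom n (fun=> 1) x.
  rewrite /mom !mulr_sumr -sumrB -big_split /=; apply: eq_bigr => i _.
  by field.
by rewrite momk2 momk mom1; field.
Qed.


Lemma abel (R : realType) N (a q : nat -> R) : a 0%N = 0 -> q N = 0 ->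
  \sum_(1 <= i < N.+1) a i * (q i.-1 - q i) = \sum_(0 <= k < N) (a k.+1 - a k) * q k.
Proof.
move=> a0 qN.
under eq_bigr do rewrite mulrBr.
rewrite sumrB big_add1 /=.
under [in RHS]eq_bigr do rewrite mulrBl.
rewrite sumrB; congr (_ - _).
rewrite [RHS](_ : _ = \sum_(0 <= i < N.+1) a i * q i); last first.
  by rewrite big_nat_recr //= qN mulr0 addr0.
by rewrite [RHS]big_ltn //= a0 mul0r add0r.
Qed.

Lemma KB_rewrite (R : realType) (A : R -> R -> R) n (x y : R) :
  (forall j, (j <= n.+1)%N -> A (0%:R / n.+1%:R) (j%:R / n.+1%:R) = 0) ->
  (forall i, (i <= n.+1)%N -> A (i%:R / n.+1%:R) (0%:R / n.+1%:R) = 0) ->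
  KBernstein A n.+1 x y = \sum_(0 <= k < n.+1) \sum_(0 <= j < n.+2)
    (n.+1%:R * (A (k.+1%:R / n.+1%:R) (j%:R / n.+1%:R) - A (k%:R / n.+1%:R) (j%:R / n.+1%:R)))
     * bern n k x * bern n.+1 j y.
Proof.
move=> hA0 hAi0.
rewrite /KBernstein /= exchange_big [RHS]exchange_big /=.
have Z : \sum_(0 <= k < n.+1) (n.+1%:R * (A (k.+1%:R / n.+1%:R) (0%:R / n.+1%:R)
     - A (k%:R / n.+1%:R) (0%:R / n.+1%:R))) * bern n k x * bern n.+1 0 y = 0.
  rewrite big_nat_cond big1 // => k /andP[/andP[_ hk] _].
  by rewrite !hAi0 ?subrr ?mulr0 ?mul0r //; lia.
rewrite [RHS]big_ltn //= Z add0r.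
rewrite mulr_sumr; apply: eq_big_nat => j /andP[j1 jN].
rewrite -big_distrl /=.
rewrite (@abel _ n.+1 (fun i => A (i%:R / n.+1%:R) (j%:R / n.+1%:R)) (fun i => bern n i x)).
- rewrite big_distrl /= mulr_sumr; apply: eq_bigr => k _; ring.
- exact: hA0.
- exact: bern_out.
Qed.


Lemma unif_cont (R : realType) (f : R * R -> R) :
  {within square01, continuous f} ->
  forall e : R, 0 < e -> exists2 d : R, 0 < d &
   forall p q : R * R, square01 p -> square01 q ->
     `|p.1 - q.1| < d -> `|p.2 - q.2| < d -> `|f p - f q| < e.
Proof.
move=> fc e e0.
have cpt : compact (square01 : set (R * R)).
  by apply: compact_setX; exact: segment_compact.
move/compact_near_coveringP/near_covering_withinP : cpt.
move=> /(_ R (0:R)^'+ (fun d p => forall q, square01 q ->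
   `|p.1 - q.1| < d -> `|p.2 - q.2| < d -> `|f p - f q| < e)) H.
have H2 : \forall d \near (0:R)^'+, square01 `<=` (fun p => forall q, square01 q ->
   `|p.1 - q.1| < d -> `|p.2 - q.2| < d -> `|f p - f q| < e).
  apply: H => p sp.
  have := (subspace_continuousP _ _).1 fc p sp.
  move=> /cvgrPdist_lt /(_ (e/2)) [|]; first by rewrite divr_gt0.
  move=> [U1 U2] /= [/nbhs_ballP[η1 /= η10 B1] /nbhs_ballP[η2 /= η20 B2]] HU.
  have η0 : 0 < Num.min η1 η2 / 2 by rewrite divr_gt0 // lt_min η10 η20.
  exists (ball p (Num.min η1 η2 / 2), [set d | 0 < d /\ d < Num.min η1 η2 / 2]) => /=.
    split; first exact: nbhsx_ballx.
    exact: filterI (nbhs_right_gt 0) (nbhs_right_lt η0).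
  move=> [x' d] /= [[bx1 bx2] [d0 dη]] sx' q sq h1 h2.
  rewrite /ball /= in bx1 bx2.
  have hm1 : Num.min η1 η2 <= η1 by rewrite ge_min lexx.
  have hm2 : Num.min η1 η2 <= η2 by rewrite ge_min lexx orbT.
  have fx' : `|f p - f x'| < e / 2.
    apply: (HU x') => //; split.
    - apply: B1; rewrite /ball /=; lra.
    - apply: B2; rewrite /ball /=; lra.
  have fq : `|f p - f q| < e / 2.
    apply: (HU q) => //; split.
    - apply: B1; rewrite /ball /=.
      have := ler_distD x'.1 p.1 q.1; lra.
    - apply: B2; rewrite /ball /=.
      have := ler_distD x'.2 p.2 q.2; lra.
  have := ler_distD (f p) (f x') (f q); rewrite distrC in fx'; lra.
have [d [d0 Hd]] : exists d : R, 0 < d /\ square01 `<=` (fun p => forall q, square01 q ->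
   `|p.1 - q.1| < d -> `|p.2 - q.2| < d -> `|f p - f q| < e).
  near (0:R)^'+ => d; exists d; split; [near: d; exact: nbhs_right_gt|near: d; exact: H2].
exists d => // p q sp sq h1 h2; exact: Hd.
Unshelve. all: end_near.
Qed.

Lemma kcdf01 (R : realType) (K : R.-pker R ~> R) t v :
  K t `[0, v]%classic = (kernel_cdf K t v)%:E /\ 0 <= kernel_cdf K t v <= 1.
Proof.
pose S : set R := `[0, v]%classic; rewrite -/S.
have h0 : (0 <= K t S)%E := measure_ge0 _ _.
have h1 : (K t S <= 1)%E.
  rewrite -(@prob_kernel _ _ _ _ _ K t); apply: le_measure => //; rewrite inE //.
  exact: measurable_itv.
have fin : K t S \is a fin_num by rewrite ge0_fin_numE // (le_lt_trans h1) ?ltey.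
rewrite /kernel_cdf fineK //; split => //.
by apply/andP; split; rewrite -lee_fin fineK.
Qed.

Lemma ge0fin (R : realType) (x : R) : (0 <= x)%R -> (0 <= x%:E)%E.
Proof. by move=> h; have : (0%:E <= x%:E)%E by rewrite lee_fin. Qed.

Lemma incr (R : realType) (A : R -> R -> R) (mu : {measure set (R * R) -> \bar R})
  (K : R.-pker R ~> R) : is_copula A mu -> markov_kernel_of mu K ->
  forall a b v lo hi, 0 <= a -> a <= b -> b <= 1 -> 0 <= v -> v <= 1 ->
  0 <= lo -> 0 <= hi ->
  (forall t, a < t -> t <= b -> lo <= kernel_cdf K t v <= hi) ->
  lo * (b - a) <= A b v - A a v <= hi * (b - a).
Proof.
move=> [[hmu _] _] [_ hdis] a b v lo hi a0 ab b1 v0 v1 lo0 hi0 hb.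
pose V : set R := `[0, v]%classic.
pose Ia : set R := `[0, a]%classic.
pose Ib : set R := `[0, b]%classic.
pose J : set R := `]a, b]%classic.
have mV : measurable V by exact: measurable_itv.
have mJ : measurable J by exact: measurable_itv.
have EU : Ib `*` V = (Ia `*` V) `|` (J `*` V).
  apply/seteqP; split => [[s w]|[s w]] /=; rewrite /Ia /Ib /J /V /= !in_itv /=.
    move=> [/andP[s0 sb] wv]; have [sa|sa] := leP s a.
      by left; split => //; apply/andP; split.
    by right; split => //; apply/andP; split.
  by move=> [] [/andP[h1 h2] wv]; split => //; apply/andP; split => //; lra.
have D0 : (Ia `*` V) `&` (J `*` V) = set0.
  apply/seteqP; split => [[s w]|[s w]] //=; rewrite /Ia /J /V /= !in_itv /=.
  move=> [[/andP[h1 h2] _] [/andP[h3 h4] _]]; lra.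
have I01P : forall x : R, 0 <= x -> x <= 1 -> x \in (I01 : set R).
  by move=> x x0 x1; rewrite inE /I01 /= in_itv /= x0 x1.
have hb' : ((A b v)%:E = (A a v)%:E + mu (J `*` V))%E.
  rewrite -hmu ?I01P //; last lra.
  rewrite -hmu ?I01P //; last lra.
  rewrite -measureU //; first by rewrite -EU.
  - exact: measurableX (measurable_itv _) mV.
  - exact: measurableX mJ mV.
have hJ : (mu (J `*` V) = \int[lebesgue_measure]_(x in J) K x V)%E.
  rewrite hdis //.
  - by move=> t; rewrite /J /I01 /= !in_itv /= => /andP[h1 h2]; apply/andP; split; lra.
  - by move=> t; rewrite /V /I01 /= !in_itv /= => /andP[h1 h2]; apply/andP; split; lra.
have lenJ : lebesgue_measure J = (b - a)%:E.
  rewrite /J lebesgue_measure_itv /= lte_fin.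
  have [ab'|ba] := ltP a b; first by rewrite EFinB.
  have -> : b = a by apply/eqP; rewrite eq_le ba ab.
  by rewrite subrr.
have mK : measurable_fun J (K ^~ V).
  exact: (measurable_funS measurableT (@subsetT _ J) (measurable_kernel K V mV)).
have Jab : forall x, J x -> a < x /\ x <= b.
  by move=> x; rewrite /J /= in_itv /= => /andP[].
have Ilo : (\int[lebesgue_measure]_(x in J) (lo%:E) = (lo * (b - a))%:E)%E.
  by rewrite integral_cst // EFinM; congr (_ * _)%E; exact: lenJ.
have Ihi : (\int[lebesgue_measure]_(x in J) (hi%:E) = (hi * (b - a))%:E)%E.
  by rewrite integral_cst // EFinM; congr (_ * _)%E; exact: lenJ.
have L : (\int[lebesgue_measure]_(x in J) lo%:E <= \int[lebesgue_measure]_(x in J) K x V)%E.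
  apply: ge0_le_integral => //; try (by move=> *; exact: ge0fin);
    try (by move=> *; exact: measure_ge0).
  move=> x /Jab [h1 h2]; have [-> _] := kcdf01 K x v; rewrite lee_fin.
  by have /andP[] := hb x h1 h2.
have U : (\int[lebesgue_measure]_(x in J) K x V <= \int[lebesgue_measure]_(x in J) hi%:E)%E.
  apply: ge0_le_integral => //; try (by move=> *; exact: ge0fin);
    try (by move=> *; exact: measure_ge0).
  move=> x /Jab [h1 h2]; have [-> _] := kcdf01 K x v; rewrite lee_fin.
  by have /andP[] := hb x h1 h2.
rewrite -hJ Ilo in L; rewrite -hJ Ihi in U.
have fin : mu (J `*` V) \is a fin_num.
  rewrite fin_numE; apply/andP; split.
    by apply: contraTneq L => ->; rewrite leNgt ltNye.
  by apply: contraTneq U => ->; rewrite leNgt ltey.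
have eqA : A b v = A a v + fine (mu (J `*` V)).
  by apply: EFin_inj; rewrite EFinD fineK.
rewrite eqA addrAC subrr add0r.
rewrite -(fineK fin) lee_fin in L; rewrite -(fineK fin) lee_fin in U.
by rewrite L U.
Qed.

Lemma I01P (R : realType) (x : R) : 0 <= x -> x <= 1 -> x \in (I01 : set R).
Proof. by move=> x0 x1; rewrite inE /I01 /= in_itv /= x0 x1. Qed.

Lemma A0v (R : realType) (A : R -> R -> R) (mu : {measure set (R * R) -> \bar R}) v :
  is_copula A mu -> 0 <= v -> v <= 1 -> A 0 v = 0.
Proof.
move=> [[hmu _] hm] v0 v1.
have h1 : ((A 0 v)%:E <= (A 0 1)%:E)%E.
  rewrite -!hmu ?I01P //; apply: le_measure; rewrite ?inE.
  - by apply: measurableX; exact: measurable_itv.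
  - by apply: measurableX; exact: measurable_itv.
  - move=> [s w] /= [h1 h2]; split => //; move: h2; rewrite /= !in_itv /= => /andP[? ?].
    by apply/andP; split => //; lra.
have h0 : (0%:E <= (A 0 v)%:E)%E by rewrite -hmu ?I01P //; exact: measure_ge0.
have [e1 _] := hm 0 (I01P (lexx 0) ler01).
rewrite e1 lee_fin in h1; rewrite lee_fin in h0.
by apply/eqP; rewrite eq_le h0 andbT (le_trans h1).
Qed.

Lemma Au0 (R : realType) (A : R -> R -> R) (mu : {measure set (R * R) -> \bar R}) u :
  is_copula A mu -> 0 <= u -> u <= 1 -> A u 0 = 0.
Proof.
move=> [[hmu _] hm] u0 u1.
have h1 : ((A u 0)%:E <= (A 1 0)%:E)%E.
  rewrite -!hmu ?I01P //; apply: le_measure; rewrite ?inE.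
  - by apply: measurableX; exact: measurable_itv.
  - by apply: measurableX; exact: measurable_itv.
  - move=> [s w] /= [h1 h2]; split => //; move: h1; rewrite /= !in_itv /= => /andP[? ?].
    by apply/andP; split => //; lra.
have h0 : (0%:E <= (A u 0)%:E)%E by rewrite -hmu ?I01P //; exact: measure_ge0.
have [_ e1] := hm 0 (I01P (lexx 0) ler01).
rewrite e1 lee_fin in h1; rewrite lee_fin in h0.
by apply/eqP; rewrite eq_le h0 andbT (le_trans h1).
Qed.

Lemma sq_lemma (R : realType) (d p q : R) : 0 < d ->
  ~~ ((- (d / 2) < p < d / 2) && (- d < q < d)) -> d ^+ 2 <= 4 * (p ^+ 2 + q ^+ 2).
Proof.
move=> d0; have e : (d / 2) ^+ 2 = d ^+ 2 / 4 by field.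
rewrite negb_and !negb_and -!leNgt => /orP[/orP[h|h]|/orP[h|h]].
- have h' : d / 2 <= - p by lra.
  have : (d / 2) ^+ 2 <= (- p) ^+ 2 by rewrite ler_sqr ?nnegrE //; lra.
  rewrite sqrrN e => h2; have := sqr_ge0 q; lra.
- have : (d / 2) ^+ 2 <= p ^+ 2 by rewrite ler_sqr ?nnegrE //; lra.
  rewrite e => h2; have := sqr_ge0 q; lra.
- have : d ^+ 2 <= (- q) ^+ 2 by rewrite ler_sqr ?nnegrE //; lra.
  rewrite sqrrN => h2; have := sqr_ge0 p; have := sqr_ge0 d; lra.
- have : d ^+ 2 <= q ^+ 2 by rewrite ler_sqr ?nnegrE //; lra.
  move=> h2; have := sqr_ge0 p; have := sqr_ge0 d; lra.
Qed.


Lemma scaleD (R : realType) (N lo hi d : R) : 0 < N -> lo * N^-1 <= d <= hi * N^-1 ->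
  lo <= N * d <= hi.
Proof.
move=> N0 /andP[h1 h2].
rewrite -(ler_pM2l N0) mulrCA mulfV ?gt_eqF // mulr1 in h1.
rewrite -(ler_pM2l N0) mulrCA mulfV ?gt_eqF // mulr1 in h2.
by rewrite h1 h2.
Qed.

Lemma Dbound (R : realType) (A : R -> R -> R) (mu : {measure set (R * R) -> \bar R})
  (K : R.-pker R ~> R) (eps delta : R) :
  is_copula A mu -> markov_kernel_of mu K -> 0 < eps -> 0 < delta ->
  (forall t x v y, 0 <= t <= 1 -> 0 <= x <= 1 -> 0 <= v <= 1 -> 0 <= y <= 1 ->
     `|t - x| < delta -> `|v - y| < delta ->
     `|kernel_cdf K t v - kernel_cdf K x y| < eps) ->
  forall n k j x y, (0 < n)%N -> (k <= n)%N -> (j <= n.+1)%N ->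
  n.+1%:R^-1 <= delta / 2 -> 0 <= x <= 1 -> 0 <= y <= 1 ->
  `|n.+1%:R * (A (k.+1%:R / n.+1%:R) (j%:R / n.+1%:R) - A (k%:R / n.+1%:R) (j%:R / n.+1%:R))
     - kernel_cdf K x y|
   <= eps + 4 / delta ^+ 2 * ((k%:R / n%:R - x) ^+ 2 + (j%:R / n.+1%:R - y) ^+ 2).
Proof.
move=> hcop hK eps0 d0 hu n k j x y n0 kn jN Nd /andP[x0 x1] /andP[y0 y1].
set Nr := n.+1%:R.
have Nr0 : 0 < Nr by rewrite /Nr ltr0n.
have nr0 : 0 < n%:R :> R by rewrite ltr0n.
have NrE : Nr = n%:R + 1 by rewrite /Nr -natr1.
have knr : k%:R <= n%:R :> R by rewrite ler_nat.
have jNr : j%:R <= Nr by rewrite /Nr ler_nat.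
have k0 : 0 <= k%:R :> R by [].
have j0 : 0 <= j%:R :> R by [].
set a := k%:R / Nr; set b := k.+1%:R / Nr; set v := j%:R / Nr; set u := k%:R / n%:R.
set G := kernel_cdf K x y.
have ba : b - a = Nr^-1 by rewrite /b /a -natr1; field; rewrite gt_eqF.
have a0 : 0 <= a by rewrite /a divr_ge0 // ltW.
have b1 : b <= 1 by rewrite /b ler_pdivrMr // mul1r /Nr ler_nat.
have v0 : 0 <= v by rewrite /v divr_ge0 // ltW.
have v1 : v <= 1 by rewrite /v ler_pdivrMr // mul1r.
have au : a <= u.
  rewrite /a /u ler_pdivrMr // mulrAC ler_pdivlMr // NrE; nra.
have ub : u <= b.
  rewrite /b /u ler_pdivrMr // mulrAC ler_pdivlMr // NrE -natr1; nra.
have [G0 G1] : 0 <= G /\ G <= 1 by have [_ /andP[]] := kcdf01 K x y.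
have key : forall lo hi, 0 <= lo -> 0 <= hi ->
    (forall t, a < t -> t <= b -> lo <= kernel_cdf K t v <= hi) ->
    lo <= Nr * (A b v - A a v) <= hi.
  move=> lo hi lo0 hi0 hb; apply: scaleD => //; rewrite -ba.
  apply: (incr hcop hK) => //; lra.
have Nd' : Nr^-1 <= delta / 2 := Nd.
clearbody a b u v Nr.
have c0 : 0 < 4 / delta ^+ 2 by rewrite divr_gt0 // exprn_gt0.
have sq0 : 0 <= (u - x) ^+ 2 + (v - y) ^+ 2 by rewrite addr_ge0 // sqr_ge0.
have Rge : eps <= eps + 4 / delta ^+ 2 * ((u - x) ^+ 2 + (v - y) ^+ 2).
  by rewrite lerDl mulr_ge0 // ltW.
have [C|C] := boolP ((- (delta / 2) < u - x < delta / 2) && (- delta < v - y < delta)).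
- move: C => /andP[/andP[c1 c2] /andP[c3 c4]].
  have bnd : forall t, a < t -> t <= b -> G - eps < kernel_cdf K t v < G + eps.
    move=> t ta tb.
    have t01 : 0 <= t <= 1 by apply/andP; split; lra.
    have x01 : 0 <= x <= 1 by apply/andP; split.
    have y01 : 0 <= y <= 1 by apply/andP; split.
    have v01 : 0 <= v <= 1 by apply/andP; split.
    have h1 : `|t - x| < delta.
      rewrite ltr_norml; apply/andP; split; lra.
    have h2 : `|v - y| < delta by rewrite ltr_norml; apply/andP; split; lra.
    have := hu t x v y t01 x01 v01 y01 h1 h2; rewrite ltr_norml -/G.
    by move=> /andP[? ?]; apply/andP; split; lra.
  have [hG|hG] := leP 0 (G - eps).
  + have hb2 : forall t, a < t -> t <= b -> G - eps <= kernel_cdf K t v <= G + eps.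
      by move=> t ta tb; have /andP[? ?] := bnd t ta tb; apply/andP; split; lra.
    have Ge : 0 <= G + eps by lra.
    have /andP[d1 d2] := key _ _ hG Ge hb2.
    rewrite ler_norml; apply/andP; split; lra.
  + have hb2 : forall t, a < t -> t <= b -> 0 <= kernel_cdf K t v <= G + eps.
      move=> t ta tb; have /andP[? ?] := bnd t ta tb.
      by have [_ /andP[? ?]] := kcdf01 K t v; apply/andP; split; lra.
    have Ge : 0 <= G + eps by lra.
    have /andP[d1 d2] := key _ _ (lexx 0) Ge hb2.
    rewrite ler_norml; apply/andP; split; lra.
- have hb2 : forall t, a < t -> t <= b -> 0 <= kernel_cdf K t v <= 1.
    by move=> t _ _; have [_ ->] := kcdf01 K t v.
  have /andP[d1 d2] := key _ _ (lexx 0) ler01 hb2.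
  have sq : delta ^+ 2 <= 4 * ((u - x) ^+ 2 + (v - y) ^+ 2).
    exact: sq_lemma d0 C.
  have one : 1 <= 4 / delta ^+ 2 * ((u - x) ^+ 2 + (v - y) ^+ 2).
    by rewrite mulrAC ler_pdivlMr ?exprn_gt0 // mul1r.
  rewrite ler_norml; apply/andP; split; lra.
Qed.

Lemma dsum (R : realType) (I J : seq nat) (p q U V : nat -> R) (eps c : R) :
  \sum_(k <- I) p k = 1 -> \sum_(j <- J) q j = 1 ->
  \sum_(k <- I) \sum_(j <- J) (eps + c * (U k + V j)) * p k * q j
  = eps + c * (\sum_(k <- I) U k * p k + \sum_(j <- J) V j * q j).
Proof.
move=> hp hq.
have step : forall k, \sum_(j <- J) (eps + c * (U k + V j)) * p k * q j =
    eps * p k + c * (U k * p k) + (c * \sum_(j <- J) V j * q j) * p k.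
  move=> k.
  have -> : eps * p k + c * (U k * p k) = (eps * p k + c * (U k * p k)) * \sum_(j <- J) q j.
    by rewrite hq mulr1.
  rewrite !mulr_sumr big_distrl -big_split /=; apply: eq_bigr => j _; ring.
under eq_bigr do rewrite step.
rewrite !big_split /= -!mulr_sumr hp; ring.
Qed.


Lemma main_bound (R : realType) (A : R -> R -> R) (mu : {measure set (R * R) -> \bar R})
  (K : R.-pker R ~> R) (eps delta : R) :
  is_copula A mu -> markov_kernel_of mu K -> 0 < eps -> 0 < delta ->
  (forall t x v y, 0 <= t <= 1 -> 0 <= x <= 1 -> 0 <= v <= 1 -> 0 <= y <= 1 ->
     `|t - x| < delta -> `|v - y| < delta ->
     `|kernel_cdf K t v - kernel_cdf K x y| < eps) ->
  forall n x y, (0 < n)%N -> n.+1%:R^-1 <= delta / 2 -> 0 <= x <= 1 -> 0 <= y <= 1 ->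
  `|KBernstein A n.+1 x y - kernel_cdf K x y|
   <= eps + 4 / delta ^+ 2 * (x * (1 - x) / n%:R + y * (1 - y) / n.+1%:R).
Proof.
move=> hcop hK eps0 d0 hu n x y n0 Nd x01 y01.
have N0 : 0 < n.+1%:R :> R by rewrite ltr0n.
have g01 : forall j, (j <= n.+1)%N -> 0 <= (j%:R / n.+1%:R : R) <= 1.
  move=> m mN; apply/andP; split; [by rewrite divr_ge0 // ltW | by rewrite ler_pdivrMr // mul1r ler_nat].
rewrite KB_rewrite; first last.
- move=> i iN; have /andP[? ?] := g01 i iN; rewrite mul0r (Au0 hcop) //.
- move=> j jN; have /andP[? ?] := g01 j jN; rewrite mul0r (A0v hcop) //.
set G := kernel_cdf K x y.
have Px : \sum_(0 <= k < n.+1) bern n k x = 1.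
  by have := mom1 n x; rewrite /mom; under eq_bigr do rewrite mul1r.
have Py : \sum_(0 <= j < n.+2) bern n.+1 j y = 1.
  by have := mom1 n.+1 y; rewrite /mom; under eq_bigr do rewrite mul1r.
have HG : \sum_(0 <= k < n.+1) \sum_(0 <= j < n.+2) G * bern n k x * bern n.+1 j y = G.
  under eq_bigr do rewrite -mulr_sumr Py mulr1.
  by rewrite -mulr_sumr Px mulr1.
rewrite -[X in `|_ - X|]HG -sumrB.
under eq_bigr do rewrite -sumrB.
apply: le_trans (ler_norm_sum _ _ _) _.
have /andP[x0 x1] := x01; have /andP[y0 y1] := y01.
apply: le_trans (_ : \sum_(0 <= k < n.+1) \sum_(0 <= j < n.+2)
   (eps + 4 / delta ^+ 2 * ((k%:R / n%:R - x) ^+ 2 + (j%:R / n.+1%:R - y) ^+ 2))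
     * bern n k x * bern n.+1 j y <= _).
  apply: ler_sum_nat => k /andP[_ kn].
  apply: le_trans (ler_norm_sum _ _ _) _.
  apply: ler_sum_nat => j /andP[_ jn].
  rewrite -!mulrBl normrM normrM (ger0_norm (bern_ge0 _ _ y01)) (ger0_norm (bern_ge0 _ _ x01)).
  apply: ler_wpM2r; first exact: bern_ge0.
  apply: ler_wpM2r; first exact: bern_ge0.
  exact: (Dbound hcop hK eps0 d0 hu).
rewrite (dsum (fun k => (k%:R / n%:R - x) ^+ 2) (fun j => (j%:R / n.+1%:R - y) ^+ 2)
   eps (4 / delta ^+ 2) Px Py).
by rewrite bern_var // bern_var.
Qed.

Lemma final_arith (R : realType) (e delta n x y : R) : 0 < e -> 0 < delta -> 0 < n ->
  16 / (delta ^+ 2 * e) < n -> 0 <= x <= 1 -> 0 <= y <= 1 ->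
  e / 2 + 4 / delta ^+ 2 * (x * (1 - x) / n + y * (1 - y) / (n + 1)) <= e.
Proof.
move=> e0 d0 n0 hn /andP[x0 x1] /andP[y0 y1].
have hx : 0 <= x * (1 - x) <= 1 by apply/andP; split; nra.
have hy : 0 <= y * (1 - y) <= 1 by apply/andP; split; nra.
have w0 : 0 < n^-1 by rewrite invr_gt0.
have wN : (n + 1)^-1 <= n^-1 by rewrite lef_pV2 ?posrE ?ltr_wpDr //; lra.
have a1 : x * (1 - x) / n <= n^-1.
  by case/andP: hx => ? ?; rewrite ler_piMl // ltW.
have a2 : y * (1 - y) / (n + 1) <= n^-1.
  case/andP: hy => ? ?; apply: le_trans wN; rewrite ler_piMl // ltW // invr_gt0; lra.
have d2 : 0 < delta ^+ 2 by rewrite exprn_gt0.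
have c0 : 0 < 4 / delta ^+ 2 by rewrite divr_gt0.
have : 4 / delta ^+ 2 * (x * (1 - x) / n + y * (1 - y) / (n + 1)) <= 4 / delta ^+ 2 * (2 * n^-1).
  by rewrite ler_pM2l //; lra.
suff : 4 / delta ^+ 2 * (2 * n^-1) <= e / 2 by lra.
rewrite ltr_pdivrMr ?mulr_gt0 // in hn.
have -> : 4 / delta ^+ 2 * (2 * n^-1) = 8 / (n * delta ^+ 2).
  by field; rewrite !gt_eqF.
rewrite ler_pdivrMr ?mulr_gt0 //; nra.
Qed.


Lemma sq01P (R : realType) (t v : R) : 0 <= t <= 1 -> 0 <= v <= 1 -> square01 (t, v).
Proof. by move=> ht hv; split; rewrite /I01 /= in_itv /=. Qed.

Lemma sq01E (R : realType) (p : R * R) : square01 p -> 0 <= p.1 <= 1 /\ 0 <= p.2 <= 1.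
Proof. by case: p => t v [] /=; rewrite /I01 /= !in_itv /=. Qed.

Unset Implicit Arguments. Set Strict Implicit. Set Printing Implicit Defensive.

Theorem lemma4p1 (R : realType) (A : R -> R -> R)
    (mu : {measure set (R * R) -> \bar R}) (K : R.-pker R ~> R) :
  is_copula A mu ->
  markov_kernel_of mu K ->
  {within square01, continuous (fun p : R * R => kernel_cdf K p.1 p.2)} ->
  (fun N : nat => sup [set `|KBernstein A N p.1 p.2 - kernel_cdf K p.1 p.2|
                       | p in square01]) @ \oo --> 0.
Proof.
move=> hcop hK hc.
apply/cvgrPdist_le => e e0.
have e20 : 0 < e / 2 by rewrite divr_gt0.
have [delta d0 Hd] := unif_cont hc e20.
have hu : forall t x v y, 0 <= t <= 1 -> 0 <= x <= 1 -> 0 <= v <= 1 -> 0 <= y <= 1 ->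
     `|t - x| < delta -> `|v - y| < delta ->
     `|kernel_cdf K t v - kernel_cdf K x y| < e / 2.
  move=> t x v y ht hx hv hy h1 h2.
  exact: (Hd (t, v) (x, y) (sq01P ht hv) (sq01P hx hy) h1 h2).
set B := 16 / (delta ^+ 2 * e) + 2 / delta.
have B0 : 0 <= B by rewrite addr_ge0 // divr_ge0 // ?mulr_ge0 ?exprn_ge0 // ltW.
set M := Num.Def.archi_bound B.
have BM : B < M%:R := archi_boundP B0.
exists M.+2 => // N /= hN.
case: N hN => [//|n] hN.
have n0 : (0 < n)%N by lia.
have Mn : M%:R <= n%:R :> R by rewrite ler_nat; lia.
have nr0 : 0 < n%:R :> R by rewrite ltr0n.
have Nr : n.+1%:R = n%:R + 1 :> R by rewrite -natr1.
have hB1 : 16 / (delta ^+ 2 * e) < n%:R.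
  have : 0 <= 2 / delta by rewrite divr_ge0 // ltW.
  rewrite /B in BM; lra.
have hB2 : 2 / delta < n%:R.
  have : 0 <= 16 / (delta ^+ 2 * e) by rewrite divr_ge0 // mulr_ge0 // ?exprn_ge0 // ltW.
  rewrite /B in BM; lra.
have Nd : n.+1%:R^-1 <= delta / 2.
  rewrite -[_^-1]mul1r ler_pdivrMr ?ltr0n // mulrC mulrA.
  rewrite ltr_pdivrMr // in hB2; rewrite Nr; nra.
set S := [set _ | _ in _].
have ub : ubound S e.
  move=> z [p sp <-]; have [x01 y01] := sq01E sp.
  apply: le_trans (main_bound hcop hK e20 d0 hu n0 Nd x01 y01) _.
  by rewrite Nr; exact: final_arith.
have S0 : S (`|KBernstein A n.+1 0 0 - kernel_cdf K 0 0|).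
  by exists (0, 0) => //; apply: sq01P; rewrite lexx ler01.
have Sge : 0 <= sup S.
  apply: le_trans (ub_le_sup _ S0) => //; by exists e.
have Sle : sup S <= e by apply: ge_sup => //; exists (`|KBernstein A n.+1 0 0 - kernel_cdf K 0 0|).
by rewrite sub0r normrN ger0_norm.
Qed.
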